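(* Let $T$ be a bimonad on a monoidal category $\mathcal C$ and $Q$ a bimonad on the monoidal category $\mathcal C^T$. If $T$ and $Q$ are left (resp. right) Hopf monads, then the cross product $Q\ltimes T$ is a left (resp. right) Hopf monad on $\mathcal C$. In particular the cross product of two Hopf monads is a Hopf monad.
   Context: Monoidal categories are strict. A bimonad is a monad $(T,\mu,\eta)$ with a comonoidal structure $T_2(X,Y)\colon T(X\otimes Y)\to TX\otimes TY$, $T_0\colon T\mathbb 1\to\mathbb 1$ such that $\mu,\eta$ are comonoidal. $\mathcal C^T$ is the category of $T$-modules, monoidal with $(M,r)\otimes(N,s)=(M\otimes N,(r\otimes s)T_2(M,N))$, unit $(\mathbb 1,T_0)$; $(F_T,U_T)$ is the free/forgetful adjunction, a comonoidal adjunction. The cross product $Q\ltimes T$ is the bimonad on $\mathcal C$ of the composite comonoidal adjunction $(F_QF_T\colon\mathcal C\to(\mathcal C^T)^Q,\;U_TU_Q)$: as a functor $Q\ltimes T=U_TQF_T$, with product $q_{F_T}Q(\varepsilon_{QF_T})$ and unit $v_{F_T}\eta$ ($q,v$ the product and unit of $Q$, $\varepsilon$ the counit of $(F_T,U_T)$), and comonoidal structure $(Q\ltimes T)_2(X,Y)=Q_2(F_TX,F_TY)\,Q((F_T)_2(X,Y))$, $(Q\ltimes T)_0=Q_0Q((F_T)_0)$. $T$ is a left (resp. right) Hopf monad if $H^l_{X,Y}=(TX\otimes\mu_Y)T_2(X,TY)$ (resp. $H^r_{X,Y}=(\mu_X\otimes TY)T_2(TX,Y)$) is invertible for all $X,Y$;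 Hopf if both. *)

(* Defs.v *)
From Stdlib Require Import ProofIrrelevance.
From mathcomp Require Import ssreflect ssrfun.
Set Implicit Arguments. Unset Strict Implicit. Unset Printing Implicit Defensive.

Record MonCat := MonCatMk {
  ob : Type;
  hom : ob -> ob -> Type;
  idm : forall X, hom X X;
  comp : forall X Y Z, hom Y Z -> hom X Y -> hom X Z;
  tens : ob -> ob -> ob;
  tensm : forall X X' Y Y', hom X X' -> hom Y Y' -> hom (tens X Y) (tens X' Y');
  munit : ob;
  assoc_ob : forall X Y Z, tens (tens X Y) Z = tens X (tens Y Z);
  lunit_ob : forall X, tens munit X = X;
  runit_ob : forall X, tens X munit = X }.

Arguments hom {m} _ _ : rename.
Arguments idm {m} X : rename.
Arguments comp {m X Y Z} _ _ : rename.
Arguments tens {m} _ _ : rename.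
Arguments tensm {m X X' Y Y'} _ _ : rename.
Arguments munit {m} : rename.
Arguments assoc_ob {m} X Y Z : rename.
Arguments lunit_ob {m} X : rename.
Arguments runit_ob {m} X : rename.

Notation "g \oo f" := (comp g f) (at level 40, left associativity).
Notation "f \ox g" := (tensm f g) (at level 35).

Definition idto (C : MonCat) (X Y : ob C) (e : X = Y) : hom X Y :=
  match e in _ = Z return hom X Z with eq_refl => idm X end.
Arguments idto {C X Y} e.

(* Axioms of a strict monoidal category: category laws, bifunctoriality of
   the tensor, and strictness of the associativity/unit constraints on
   morphisms (the structural isomorphisms are identities). *)
Record StrictMonoidal (C : MonCat) : Prop := {
  comp_idl : forall (X Y : ob C) (f : hom X Y), idm Y \oo f = f;
  comp_idr : forall (X Y : ob C) (f : hom X Y), f \oo idm X = f;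
  catA : forall (X Y Z W : ob C) (f : hom X Y) (g : hom Y Z) (h : hom Z W),
      h \oo (g \oo f) = (h \oo g) \oo f;
  tens_id : forall X Y : ob C, idm X \ox idm Y = idm (tens X Y);
  tens_comp : forall (X X' X'' Y Y' Y'' : ob C) (f : hom X X') (f' : hom X' X'')
      (g : hom Y Y') (g' : hom Y' Y''),
      (f' \oo f) \ox (g' \oo g) = (f' \ox g') \oo (f \ox g);
  assoc_nat : forall (X X' Y Y' Z Z' : ob C) (f : hom X X') (g : hom Y Y') (h : hom Z Z'),
      idto (assoc_ob X' Y' Z') \oo ((f \ox g) \ox h)
      = (f \ox (g \ox h)) \oo idto (assoc_ob X Y Z);
  lunit_nat : forall (X Y : ob C) (f : hom X Y),
      idto (lunit_ob Y) \oo (idm munit \ox f) = f \oo idto (lunit_ob X);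
  runit_nat : forall (X Y : ob C) (f : hom X Y),
      idto (runit_ob Y) \oo (f \ox idm munit) = f \oo idto (runit_ob X) }.

Record BimonadData (C : MonCat) := BimonadMk {
  fob : ob C -> ob C;
  fmap : forall X Y : ob C, hom X Y -> hom (fob X) (fob Y);
  mu : forall X, hom (fob (fob X)) (fob X);
  eta : forall X, hom X (fob X);
  cm2 : forall X Y, hom (fob (tens X Y)) (tens (fob X) (fob Y));
  cm0 : hom (fob munit) munit }.

Arguments fob {C} _ _.
Arguments fmap {C} _ {X Y} _.
Arguments mu {C} _ _.
Arguments eta {C} _ _.
Arguments cm2 {C} _ _ _.
Arguments cm0 {C} _.

Record IsBimonad (C : MonCat) (T : BimonadData C) : Prop := {
  fmap_id : forall X : ob C, fmap T (idm X) = idm (fob T X);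
  fmap_comp : forall (X Y Z : ob C) (f : hom X Y) (g : hom Y Z),
      fmap T (g \oo f) = fmap T g \oo fmap T f;
  mu_nat : forall (X Y : ob C) (f : hom X Y),
      mu T Y \oo fmap T (fmap T f) = fmap T f \oo mu T X;
  eta_nat : forall (X Y : ob C) (f : hom X Y), eta T Y \oo f = fmap T f \oo eta T X;
  mu_assoc : forall X : ob C, mu T X \oo fmap T (mu T X) = mu T X \oo mu T (fob T X);
  mu_eta_l : forall X : ob C, mu T X \oo eta T (fob T X) = idm (fob T X);
  mu_eta_r : forall X : ob C, mu T X \oo fmap T (eta T X) = idm (fob T X);
  cm2_nat : forall (X X' Y Y' : ob C) (f : hom X X') (g : hom Y Y'),
      cm2 T X' Y' \oo fmap T (f \ox g) = (fmap T f \ox fmap T g) \oo cm2 T X Y;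
  cm2_coassoc : forall X Y Z : ob C,
      idto (assoc_ob (fob T X) (fob T Y) (fob T Z))
        \oo ((cm2 T X Y \ox idm (fob T Z)) \oo cm2 T (tens X Y) Z)
      = (idm (fob T X) \ox cm2 T Y Z) \oo cm2 T X (tens Y Z)
        \oo fmap T (idto (assoc_ob X Y Z));
  cm_lunit : forall X : ob C,
      idto (lunit_ob (fob T X)) \oo ((cm0 T \ox idm (fob T X)) \oo cm2 T munit X)
      = fmap T (idto (lunit_ob X));
  cm_runit : forall X : ob C,
      idto (runit_ob (fob T X)) \oo ((idm (fob T X) \ox cm0 T) \oo cm2 T X munit)
      = fmap T (idto (runit_ob X));
  mu_cm2 : forall X Y : ob C,
      cm2 T X Y \oo mu T (tens X Y)
      = (mu T X \ox mu T Y) \oo (cm2 T (fob T X) (fob T Y) \oo fmap T (cm2 T X Y));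
  mu_cm0 : cm0 T \oo mu T munit = cm0 T \oo fmap T (cm0 T);
  eta_cm2 : forall X Y : ob C, cm2 T X Y \oo eta T (tens X Y) = eta T X \ox eta T Y;
  eta_cm0 : cm0 T \oo eta T munit = idm munit }.

Definition is_iso (C : MonCat) (X Y : ob C) (f : hom X Y) : Prop :=
  exists g : hom Y X, g \oo f = idm X /\ f \oo g = idm Y.

Definition fusion_l (C : MonCat) (T : BimonadData C) (X Y : ob C) :=
  (idm (fob T X) \ox mu T Y) \oo cm2 T X (fob T Y).
Definition fusion_r (C : MonCat) (T : BimonadData C) (X Y : ob C) :=
  (mu T X \ox idm (fob T Y)) \oo cm2 T (fob T X) Y.

Definition left_Hopf (C : MonCat) (T : BimonadData C) : Prop :=
  forall X Y : ob C, is_iso (fusion_l T X Y).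
Definition right_Hopf (C : MonCat) (T : BimonadData C) : Prop :=
  forall X Y : ob C, is_iso (fusion_r T X Y).
Definition Hopf (C : MonCat) (T : BimonadData C) : Prop := left_Hopf T /\ right_Hopf T.
Section Modules.
Variables (C : MonCat) (HC : StrictMonoidal C) (T : BimonadData C) (HT : IsBimonad T).

Record Mod := ModMk {
  car : ob C;
  act : hom (fob T car) car;
  act_assoc : act \oo fmap T act = act \oo mu T car;
  act_unit : act \oo eta T car = idm car }.

Definition mhom (M N : Mod) : Type :=
  { f : hom (car M) (car N) | act N \oo fmap T f = f \oo act M }.

Lemma mid_proof (M : Mod) : act M \oo fmap T (idm (car M)) = idm (car M) \oo act M.
Proof. by rewrite (fmap_id HT) (comp_idl HC) (comp_idr HC). Qed.

Definition mid (M : Mod) : mhom M M := exist _ (idm (car M)) (mid_proof M).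

Lemma mcomp_proof (M N P : Mod) (g : mhom N P) (f : mhom M N) :
  act P \oo fmap T (proj1_sig g \oo proj1_sig f) = (proj1_sig g \oo proj1_sig f) \oo act M.
Proof.
case: g f => g Hg [f Hf] /=.
by rewrite (fmap_comp HT) (catA HC) Hg -(catA HC) Hf (catA HC).
Qed.

Definition mcomp (M N P : Mod) (g : mhom N P) (f : mhom M N) : mhom M P :=
  exist _ (proj1_sig g \oo proj1_sig f) (mcomp_proof g f).

Section Tens.
Variables M N : Mod.
Let a := act M.
Let b := act N.

Lemma mtens_assoc :
  ((a \ox b) \oo cm2 T (car M) (car N)) \oo fmap T ((a \ox b) \oo cm2 T (car M) (car N))
  = ((a \ox b) \oo cm2 T (car M) (car N)) \oo mu T (tens (car M) (car N)).
Proof.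
rewrite -!(catA HC) (mu_cm2 HT) (fmap_comp HT) !(catA HC).
rewrite -[_ \oo cm2 T _ _ \oo fmap T (a \ox b)](catA HC) (cm2_nat HT).
rewrite (catA HC) -(tens_comp HC) /a /b !act_assoc (tens_comp HC).
by rewrite -!(catA HC).
Qed.

Lemma mtens_unit :
  ((a \ox b) \oo cm2 T (car M) (car N)) \oo eta T (tens (car M) (car N))
  = idm (tens (car M) (car N)).
Proof.
by rewrite -(catA HC) (eta_cm2 HT) -(tens_comp HC) /a /b !act_unit (tens_id HC).
Qed.

Definition mtens : Mod := ModMk mtens_assoc mtens_unit.
End Tens.

Lemma mtensm_proof (M M' N N' : Mod) (f : mhom M M') (g : mhom N N') :
  act (mtens M' N') \oo fmap T (proj1_sig f \ox proj1_sig g)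
  = (proj1_sig f \ox proj1_sig g) \oo act (mtens M N).
Proof.
case: f g => f Hf [g Hg] /=.
rewrite -(catA HC) (cm2_nat HT) (catA HC) -(tens_comp HC) Hf Hg.
by rewrite (tens_comp HC) (catA HC).
Qed.

Definition mtensm (M M' N N' : Mod) (f : mhom M M') (g : mhom N N')
  : mhom (mtens M N) (mtens M' N') :=
  exist _ (proj1_sig f \ox proj1_sig g) (mtensm_proof f g).

Lemma munit_assoc : cm0 T \oo fmap T (cm0 T) = cm0 T \oo mu T munit.
Proof. by rewrite (mu_cm0 HT). Qed.

Definition munitM : Mod := ModMk munit_assoc (eta_cm0 HT).

Lemma mod_eq (M N : Mod) (e : car M = car N) :
  idto e \oo act M = act N \oo fmap T (idto e) -> M = N.
Proof.
case: M e => X r r1 r2; case: N => Y s s1 s2 /= e; case: Y / e s s1 s2 => s s1 s2 /=.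
rewrite (fmap_id HT) (comp_idl HC) (comp_idr HC) => E.
case: s / E s1 s2 => s1 s2.
by rewrite (proof_irrelevance _ r1 s1) (proof_irrelevance _ r2 s2).
Qed.

Lemma massoc (M N P : Mod) : mtens (mtens M N) P = mtens M (mtens N P).
Proof.
apply: (@mod_eq (mtens (mtens M N) P) (mtens M (mtens N P)) (assoc_ob (car M) (car N) (car P))) => /=.
rewrite -[act P](comp_idr HC) (tens_comp HC) (comp_idr HC).
rewrite !(catA HC) (assoc_nat HC).
rewrite -!(catA HC) (cm2_coassoc HT).
rewrite !(catA HC) -(tens_comp HC) (comp_idr HC).
by [].
Qed.

Lemma mlunit (M : Mod) : mtens munitM M = M.
Proof.
apply: (@mod_eq (mtens munitM M) M (lunit_ob (car M))) => /=.
rewrite -[cm0 T](comp_idl HC) -[act M](comp_idr HC) (tens_comp HC).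
rewrite !(catA HC) (lunit_nat HC) -!(catA HC) (cm_lunit HT).
by rewrite (comp_idl HC).
Qed.

Lemma mrunit (M : Mod) : mtens M munitM = M.
Proof.
apply: (@mod_eq (mtens M munitM) M (runit_ob (car M))) => /=.
rewrite -[cm0 T](comp_idl HC) -[act M](comp_idr HC) (tens_comp HC).
rewrite !(catA HC) (runit_nat HC) -!(catA HC) (cm_runit HT).
by rewrite (comp_idl HC).
Qed.

End Modules.

Definition ModCat (C : MonCat) (HC : StrictMonoidal C) (T : BimonadData C)
  (HT : IsBimonad T) : MonCat :=
  @MonCatMk (Mod T) (@mhom C T) (@mid C HC T HT) (@mcomp C HC T HT)
    (@mtens C HC T HT) (@mtensm C HC T HT) (@munitM C T HT)
    (@massoc C HC T HT) (@mlunit C HC T HT) (@mrunit C HC T HT).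

Section Cross.
Variables (C : MonCat) (HC : StrictMonoidal C) (T : BimonadData C) (HT : IsBimonad T).
Let CT := ModCat HC HT.

Definition FT (X : ob C) : Mod T := ModMk (mu_assoc HT X) (mu_eta_l HT X).
Definition FTm (X Y : ob C) (f : hom X Y) : mhom (FT X) (FT Y) :=
  exist _ (fmap T f) (mu_nat HT f).
(* counit of (F_T, U_T) at a module (M, r): r : F_T M -> (M, r) *)
Definition epsM (M : Mod T) : mhom (FT (car M)) M := exist _ (act M) (act_assoc M).

Lemma FT2_proof (X Y : ob C) :
  act (mtens HC HT (FT X) (FT Y)) \oo fmap T (cm2 T X Y) = cm2 T X Y \oo act (FT (tens X Y)).
Proof. by rewrite /= (mu_cm2 HT) (catA HC). Qed.

Definition FT2 (X Y : ob C) : mhom (FT (tens X Y)) (mtens HC HT (FT X) (FT Y)) :=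
  exist _ (cm2 T X Y) (FT2_proof X Y).
Definition FT0 : mhom (FT munit) (munitM HT) := exist _ (cm0 T) (esym (mu_cm0 HT)).

(* the cross product Q ⋉ T = U_T Q F_T *)
Definition cross (Q : BimonadData CT) : BimonadData C :=
  @BimonadMk C
    (fun X => car (fob Q (FT X)))
    (fun X Y f => proj1_sig (fmap Q (FTm f)))
    (fun X => proj1_sig (mu Q (FT X)) \oo proj1_sig (fmap Q (epsM (fob Q (FT X)))))
    (fun X => proj1_sig (eta Q (FT X)) \oo eta T X)
    (fun X Y => proj1_sig (cm2 Q (FT X) (FT Y)) \oo proj1_sig (fmap Q (FT2 X Y)))
    (proj1_sig (cm0 Q) \oo proj1_sig (fmap Q FT0)).
End Cross.

(* Main.v *)
Require Import Defs.
From Stdlib Require Import ProofIrrelevance.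
From mathcomp Require Import ssreflect ssrfun.
Set Implicit Arguments. Unset Strict Implicit. Unset Printing Implicit Defensive.

Section Gen.
Variables (C : MonCat) (HC : StrictMonoidal C).

Lemma post (A B B' D : ob C) (a : hom B D) (b : hom A B) (c : hom B' D) (d : hom A B')
  (e : a \oo b = c \oo d) (W : ob C) (k : hom W A) : a \oo (b \oo k) = c \oo (d \oo k).
Proof. by rewrite !(catA HC) e. Qed.

Lemma post1 (A B D : ob C) (a : hom B D) (b : hom A B) (c : hom A D)
  (e : a \oo b = c) (W : ob C) (k : hom W A) : a \oo (b \oo k) = c \oo k.
Proof. by rewrite !(catA HC) e. Qed.

Lemma conj_iso (A B A' B' : ob C) (f : hom A B) (f' : hom B A) (g : hom A' B') (g' : hom B' A')
  (a : hom A' A) (b : hom B' B) :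
  f' \oo f = idm A -> g \oo g' = idm B' -> f \oo a = b \oo g -> a \oo g' = f' \oo b.
Proof.
move=> H1 H2 E.
rewrite -[a](comp_idl HC) -H1 -(catA HC a f f') E -!(catA HC) H2 (comp_idr HC) //.
Qed.

Lemma iso_comp (A B D : ob C) (f : hom A B) (g : hom B D) :
  is_iso f -> is_iso g -> is_iso (g \oo f).
Proof.
move=> [f' [F1 F2]] [g' [G1 G2]]; exists (f' \oo g'); split.
- by rewrite -(catA HC) (post1 G1) (comp_idl HC) F1.
- by rewrite -(catA HC) (post1 F2) (comp_idl HC) G2.
Qed.
End Gen.

Section Bim.
Variables (C : MonCat) (HC : StrictMonoidal C) (T : BimonadData C) (HT : IsBimonad T).

Lemma fl_natY (X Y Y' : ob C) (f : hom Y Y') :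
  fusion_l T X Y' \oo fmap T (idm X \ox fmap T f) = (idm _ \ox fmap T f) \oo fusion_l T X Y.
Proof.
rewrite /fusion_l -(catA HC) (cm2_nat HT) (fmap_id HT) !(catA HC) -!(tens_comp HC).
by rewrite (mu_nat HT) !(comp_idl HC).
Qed.

Lemma fl_mu (X Y : ob C) :
  fusion_l T X Y \oo fmap T (idm X \ox mu T Y) = (idm _ \ox mu T Y) \oo fusion_l T X (fob T Y).
Proof.
rewrite /fusion_l -(catA HC) (cm2_nat HT) (fmap_id HT) !(catA HC) -!(tens_comp HC).
by rewrite (mu_assoc HT) !(comp_idl HC).
Qed.

Lemma fl_eta (X Y : ob C) :
  fusion_l T X Y \oo fmap T (idm X \ox eta T Y) = cm2 T X Y.
Proof.
rewrite /fusion_l -(catA HC) (cm2_nat HT) (fmap_id HT) !(catA HC) -!(tens_comp HC).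
by rewrite (mu_eta_r HT) !(comp_idl HC) (tens_id HC) (comp_idl HC).
Qed.

Lemma hl_comm (X M : ob C) (r : hom (fob T M) M) (ra : r \oo fmap T r = r \oo mu T M) :
  ((idm _ \ox r) \oo cm2 T X M) \oo fmap T (idm X \ox r) = (idm _ \ox r) \oo fusion_l T X M.
Proof.
rewrite /fusion_l -(catA HC) (cm2_nat HT) (fmap_id HT) !(catA HC) -!(tens_comp HC).
by rewrite ra !(comp_idl HC).
Qed.

Lemma hl_iso (X M : ob C) (r : hom (fob T M) M) (ra : r \oo fmap T r = r \oo mu T M)
  (ru : r \oo eta T M = idm M) :
  left_Hopf T -> is_iso ((idm (fob T X) \ox r) \oo cm2 T X M).
Proof.
move=> Hl.
have [Hi [Hi1 Hi2]] := Hl X M.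
have [Ki [Ki1 Ki2]] := Hl X (fob T M).
have Ea : fmap T (idm X \ox fmap T r) \oo Ki = Hi \oo (idm _ \ox fmap T r).
  exact: (conj_iso HC Hi1 Ki2 (fl_natY X r)).
have Eb : fmap T (idm X \ox mu T M) \oo Ki = Hi \oo (idm _ \ox mu T M).
  exact: (conj_iso HC Hi1 Ki2 (fl_mu X M)).
have Ec : Hi \oo cm2 T X M = fmap T (idm X \ox eta T M).
  by rewrite -(fl_eta X M) (catA HC) Hi1 (comp_idl HC).
exists ((fmap T (idm X \ox r) \oo Hi) \oo (idm (fob T X) \ox eta T M)); split.
- rewrite -!(catA HC).
  rewrite (catA HC (cm2 T X M) (idm (fob T X) \ox r)) -(tens_comp HC) (comp_idl HC) (eta_nat HT).
  rewrite -{1}[idm (fob T X)](comp_idl HC) (tens_comp HC) -!(catA HC).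
  rewrite -(post HC Ea) !(catA HC) -(fmap_comp HT) -(tens_comp HC) (comp_idl HC) ra.
  rewrite -{1}[idm X](comp_idl HC) (tens_comp HC) (fmap_comp HT) -!(catA HC) (post HC Eb).
  rewrite (catA HC (cm2 T X M) (idm (fob T X) \ox eta T (fob T M))) -(tens_comp HC) (mu_eta_l HT) (comp_idl HC) (tens_id HC) (comp_idl HC).
  by rewrite Ec -(fmap_comp HT) -(tens_comp HC) ru (comp_idl HC) (tens_id HC) (fmap_id HT).
- rewrite !(catA HC) (hl_comm X ra) -(catA HC Hi (fusion_l T X M)) Hi2 (comp_idr HC) -(tens_comp HC) ru.
  by rewrite (comp_idl HC) (tens_id HC).
Qed.

Lemma fr_natX (X X' Y : ob C) (f : hom X X') :
  fusion_r T X' Y \oo fmap T (fmap T f \ox idm Y) = (fmap T f \ox idm _) \oo fusion_r T X Y.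
Proof.
rewrite /fusion_r -(catA HC) (cm2_nat HT) (fmap_id HT) !(catA HC) -!(tens_comp HC).
by rewrite (mu_nat HT) !(comp_idl HC).
Qed.

Lemma fr_mu (X Y : ob C) :
  fusion_r T X Y \oo fmap T (mu T X \ox idm Y) = (mu T X \ox idm _) \oo fusion_r T (fob T X) Y.
Proof.
rewrite /fusion_r -(catA HC) (cm2_nat HT) (fmap_id HT) !(catA HC) -!(tens_comp HC).
by rewrite (mu_assoc HT) !(comp_idl HC).
Qed.

Lemma fr_eta (X Y : ob C) :
  fusion_r T X Y \oo fmap T (eta T X \ox idm Y) = cm2 T X Y.
Proof.
rewrite /fusion_r -(catA HC) (cm2_nat HT) (fmap_id HT) !(catA HC) -!(tens_comp HC).
by rewrite (mu_eta_r HT) !(comp_idl HC) (tens_id HC) (comp_idl HC).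
Qed.

Lemma hr_comm (M Y : ob C) (r : hom (fob T M) M) (ra : r \oo fmap T r = r \oo mu T M) :
  ((r \ox idm _) \oo cm2 T M Y) \oo fmap T (r \ox idm Y) = (r \ox idm _) \oo fusion_r T M Y.
Proof.
rewrite /fusion_r -(catA HC) (cm2_nat HT) (fmap_id HT) !(catA HC) -!(tens_comp HC).
by rewrite ra !(comp_idl HC).
Qed.

Lemma hr_iso (M Y : ob C) (r : hom (fob T M) M) (ra : r \oo fmap T r = r \oo mu T M)
  (ru : r \oo eta T M = idm M) :
  right_Hopf T -> is_iso ((r \ox idm (fob T Y)) \oo cm2 T M Y).
Proof.
move=> Hl.
have [Hi [Hi1 Hi2]] := Hl M Y.
have [Ki [Ki1 Ki2]] := Hl (fob T M) Y.
have Ea : fmap T (fmap T r \ox idm Y) \oo Ki = Hi \oo (fmap T r \ox idm _).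
  exact: (conj_iso HC Hi1 Ki2 (fr_natX Y r)).
have Eb : fmap T (mu T M \ox idm Y) \oo Ki = Hi \oo (mu T M \ox idm _).
  exact: (conj_iso HC Hi1 Ki2 (fr_mu M Y)).
have Ec : Hi \oo cm2 T M Y = fmap T (eta T M \ox idm Y).
  by rewrite -(fr_eta M Y) (catA HC) Hi1 (comp_idl HC).
exists ((fmap T (r \ox idm Y) \oo Hi) \oo (eta T M \ox idm (fob T Y))); split.
- rewrite -!(catA HC).
  rewrite (catA HC (cm2 T M Y) (r \ox idm (fob T Y))) -(tens_comp HC) (comp_idl HC) (eta_nat HT).
  rewrite -{1}[idm (fob T Y)](comp_idl HC) (tens_comp HC) -!(catA HC).
  rewrite -(post HC Ea) !(catA HC) -(fmap_comp HT) -(tens_comp HC) (comp_idl HC) ra.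
  rewrite -{1}[idm Y](comp_idl HC) (tens_comp HC) (fmap_comp HT) -!(catA HC) (post HC Eb).
  rewrite (catA HC (cm2 T M Y) (eta T (fob T M) \ox idm (fob T Y))) -(tens_comp HC) (mu_eta_l HT) (comp_idl HC) (tens_id HC) (comp_idl HC).
  by rewrite Ec -(fmap_comp HT) -(tens_comp HC) ru (comp_idl HC) (tens_id HC) (fmap_id HT).
- rewrite !(catA HC) (hr_comm Y ra) -(catA HC Hi (fusion_r T M Y)) Hi2 (comp_idr HC) -(tens_comp HC) ru.
  by rewrite (comp_idl HC) (tens_id HC).
Qed.
End Bim.

Lemma fmap_iso (D : MonCat) (Q : BimonadData D) (HQ : IsBimonad Q) (A B : ob D) (f : hom A B) :
  is_iso f -> is_iso (fmap Q f).
Proof.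
move=> [g [G1 G2]]; exists (fmap Q g); split.
- by rewrite -(fmap_comp HQ) G1 (fmap_id HQ).
- by rewrite -(fmap_comp HQ) G2 (fmap_id HQ).
Qed.

Section ModIso.
Variables (C : MonCat) (HC : StrictMonoidal C) (T : BimonadData C) (HT : IsBimonad T).

Lemma mhom_eq (M N : Mod T) (f g : mhom M N) : proj1_sig f = proj1_sig g -> f = g.
Proof.
case: f => f Hf; case: g => g Hg /= E; subst g.
by rewrite (proof_irrelevance _ Hf Hg).
Qed.

Lemma iso_down (M N : Mod T) (f : @hom (ModCat HC HT) M N) :
  is_iso f -> is_iso (proj1_sig f).
Proof.
move=> [g [G1 G2]]; exists (proj1_sig g); split.
- exact: (f_equal (@proj1_sig _ _) G1).
- exact: (f_equal (@proj1_sig _ _) G2).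
Qed.

Lemma iso_up (M N : Mod T) (f : @hom (ModCat HC HT) M N) :
  is_iso (proj1_sig f) -> is_iso f.
Proof.
case: f => f Hf /= [g [G1 G2]].
have Hg : act M \oo fmap T g = g \oo act N.
  rewrite -[g \oo act N](comp_idr HC) -(fmap_id HT) -G2 (fmap_comp HT) (catA HC).
  rewrite -(catA HC (fmap T f) (act N) g) Hf (catA HC) G1 (comp_idl HC) //.
exists (exist _ g Hg : @hom (ModCat HC HT) N M); split; apply: mhom_eq => //=.
Qed.
End ModIso.

Section Main.
Variables (C : MonCat) (HC : StrictMonoidal C) (T : BimonadData C) (HT : IsBimonad T)
  (Q : BimonadData (ModCat HC HT)) (HQ : IsBimonad Q).

Definition kl (X : ob C) (M : Mod T) : @hom (ModCat HC HT) (FT HT (tens X (car M))) (mtens HC HT (FT HT X) M) :=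
  @Defs.comp (ModCat HC HT) _ _ _ (@tensm (ModCat HC HT) _ _ _ _ (@idm (ModCat HC HT) (FT HT X)) (epsM HT M))
    (FT2 HC HT X (car M)).

Lemma cross_fl (X Y : ob C) :
  fusion_l (cross Q) X Y =
  proj1_sig (fusion_l Q (FT HT X) (FT HT Y)) \oo proj1_sig (fmap Q (kl X (fob Q (FT HT Y)))).
Proof.
have E1 := f_equal (@proj1_sig _ _) (fmap_comp HQ (FT2 HC HT X (car (fob Q (FT HT Y))))
   (@tensm (ModCat HC HT) _ _ _ _ (@idm (ModCat HC HT) (FT HT X)) (epsM HT (fob Q (FT HT Y))))).
have E2 := f_equal (@proj1_sig _ _) (cm2_nat HQ (@idm (ModCat HC HT) (FT HT X)) (epsM HT (fob Q (FT HT Y)))).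
have E3 := f_equal (@proj1_sig _ _) (fmap_id HQ (FT HT X)).
rewrite /kl E1 /=.
simpl in E2, E3.
rewrite /fusion_l /= !(catA HC).
rewrite -(catA HC (sval (fmap Q (mtensm HC HT (mid HC HT (FT HT X)) (epsM HT (fob Q (FT HT Y))))))) E2 E3.
by rewrite (catA HC) -(tens_comp HC) (comp_idl HC).
Qed.

Definition kr (M : Mod T) (Y : ob C) : @hom (ModCat HC HT) (FT HT (tens (car M) Y)) (mtens HC HT M (FT HT Y)) :=
  @Defs.comp (ModCat HC HT) _ _ _ (@tensm (ModCat HC HT) _ _ _ _ (epsM HT M) (@idm (ModCat HC HT) (FT HT Y)))
    (FT2 HC HT (car M) Y).

Lemma cross_fr (X Y : ob C) :
  fusion_r (cross Q) X Y =
  proj1_sig (fusion_r Q (FT HT X) (FT HT Y)) \oo proj1_sig (fmap Q (kr (fob Q (FT HT X)) Y)).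
Proof.
have E1 := f_equal (@proj1_sig _ _) (fmap_comp HQ (FT2 HC HT (car (fob Q (FT HT X))) Y)
   (@tensm (ModCat HC HT) _ _ _ _ (epsM HT (fob Q (FT HT X))) (@idm (ModCat HC HT) (FT HT Y)))).
have E2 := f_equal (@proj1_sig _ _) (cm2_nat HQ (epsM HT (fob Q (FT HT X))) (@idm (ModCat HC HT) (FT HT Y))).
have E3 := f_equal (@proj1_sig _ _) (fmap_id HQ (FT HT Y)).
rewrite /kr E1 /=.
simpl in E2, E3.
rewrite /fusion_r /= !(catA HC).
rewrite -(catA HC (sval (fmap Q (mtensm HC HT (epsM HT (fob Q (FT HT X))) (mid HC HT (FT HT Y)))))) E2 E3.
by rewrite (catA HC) -(tens_comp HC) (comp_idl HC).
Qed.

Lemma cross_left : left_Hopf T -> left_Hopf Q -> left_Hopf (cross Q).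
Proof.
move=> HlT HlQ X Y; rewrite cross_fl; apply: (iso_comp HC).
- apply: iso_down; apply: (fmap_iso HQ); apply: iso_up.
  exact: (hl_iso HC HT X (act_assoc _) (act_unit _) HlT).
- exact: iso_down (HlQ (FT HT X) (FT HT Y)).
Qed.

Lemma cross_right : right_Hopf T -> right_Hopf Q -> right_Hopf (cross Q).
Proof.
move=> HlT HlQ X Y; rewrite cross_fr; apply: (iso_comp HC).
- apply: iso_down; apply: (fmap_iso HQ); apply: iso_up.
  exact: (hr_iso HC HT Y (act_assoc _) (act_unit _) HlT).
- exact: iso_down (HlQ (FT HT X) (FT HT Y)).
Qed.
End Main.

Theorem mainTheorem10 (C : MonCat) (HC : StrictMonoidal C)
  (T : BimonadData C) (HT : IsBimonad T)
  (Q : BimonadData (ModCat HC HT)) (HQ : IsBimonad Q) :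
  (left_Hopf T -> left_Hopf Q -> left_Hopf (cross Q)) /\
  (right_Hopf T -> right_Hopf Q -> right_Hopf (cross Q)) /\
  (Hopf T -> Hopf Q -> Hopf (cross Q)).
Proof.
split; [exact: cross_left HQ|split; [exact: cross_right HQ|]].
move=> [l1 r1] [l2 r2]; split; [exact: cross_left HQ l1 l2 | exact: cross_right HQ r1 r2].
Qed.
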